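(* Let $A$ be a closed densely defined operator in $\mathcal H$ and $G$ a bounded metric operator in $\mathcal H$ (with $G^{-1}$ possibly unbounded). Consider the conditions: (i) $GD(A)=D(A^* )$ and $A^*G\xi=GA\xi$ for every $\xi\in D(A)$; (ii) the operator $G^{1/2}AG^{-1/2}$, with domain $G^{1/2}D(A)$, is self-adjoint in $\mathcal H$; (iii) $A$ is self-adjoint in $\mathcal H(G)$; (iv) $GD(A)=D(G^{-1}A^* )$ and $A^*G\xi=GA\xi$ for every $\xi\in D(A)$. Then (i) $\Rightarrow$ (ii) $\Rightarrow$ (iii) $\Rightarrow$ (iv). If moreover the range $R(A^* )$ is contained in $D(G^{-1})$, then (i)–(iv) are equivalent.
   Context: A metric operator in $\mathcal H$ is a self-adjoint operator $G$ with $\langle G\xi,\xi\rangle>0$ for all nonzero $\xi\in D(G)$; $G^{-1}$, $G^{-1/2}$ denote the (possibly unbounded) inverses of $G$, $G^{1/2}$. For bounded metric $G$, $\mathcal H(G)$ is the completion of $\mathcal H$ under $\|\xi\|_G=\|G^{1/2}\xi\|$ with inner product $\langle\xi,\eta\rangle_G=\langle G^{1/2}\xi,G^{1/2}\eta\rangle$; $D(A)$ is dense in $\mathcal H(G)$, and ''$A$ is self-adjoint in $\mathcal H(G)$'' means $A=A^\#$, where $A^\#$ is the adjoint in $\mathcal H(G)$ of $A$ viewed as an operator in $\mathcal H(G)$ with domain $D(A)$. $D(G^{-1}A^* )=\{\zeta\in D(A^* ): A^*\zeta\in D(G^{-1})\}$. *)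

(* Defs.v *)
From Stdlib Require Import Reals Classical ClassicalEpsilon.
Open Scope R_scope.
Set Implicit Arguments.

Record C := mkC { Re : R; Im : R }.
Definition C0 : C := mkC 0 0.
Definition C1 : C := mkC 1 0.
Definition Cadd (a b : C) : C := mkC (Re a + Re b) (Im a + Im b).
Definition Cmul (a b : C) : C :=
  mkC (Re a * Re b - Im a * Im b) (Re a * Im b + Im a * Re b).
Definition Cconj (a : C) : C := mkC (Re a) (- Im a).

Record Hilbert := {
  hcar :> Type;
  hzero : hcar;
  hadd : hcar -> hcar -> hcar;
  hopp : hcar -> hcar;
  hscal : C -> hcar -> hcar;
  hip : hcar -> hcar -> C;   (* linear in the 1st, conjugate-linear in the 2nd argument *)
  hadd_assoc : forall x y z, hadd x (hadd y z) = hadd (hadd x y) z;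
  hadd_comm : forall x y, hadd x y = hadd y x;
  hadd_zero : forall x, hadd x hzero = x;
  hadd_opp : forall x, hadd x (hopp x) = hzero;
  hscal_one : forall x, hscal C1 x = x;
  hscal_assoc : forall a b x, hscal a (hscal b x) = hscal (Cmul a b) x;
  hscal_addv : forall a x y, hscal a (hadd x y) = hadd (hscal a x) (hscal a y);
  hscal_adds : forall a b x, hscal (Cadd a b) x = hadd (hscal a x) (hscal b x);
  hip_conj : forall x y, hip y x = Cconj (hip x y);
  hip_add : forall x y z, hip (hadd x y) z = Cadd (hip x z) (hip y z);
  hip_scal : forall a x y, hip (hscal a x) y = Cmul a (hip x y);
  hip_pos : forall x, 0 <= Re (hip x x);
  hip_def : forall x, Re (hip x x) = 0 -> x = hzero;
  hcomplete : forall u : nat -> hcar,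
    (forall eps, 0 < eps -> exists N, forall m n, (N <= m)%nat -> (N <= n)%nat ->
        sqrt (Re (hip (hadd (u m) (hopp (u n))) (hadd (u m) (hopp (u n))))) < eps) ->
    exists l, forall eps, 0 < eps -> exists N, forall n, (N <= n)%nat ->
        sqrt (Re (hip (hadd (u n) (hopp l)) (hadd (u n) (hopp l)))) < eps
}.
Arguments hzero {h}. Arguments hadd {h}. Arguments hopp {h}.
Arguments hscal {h}. Arguments hip {h}.

Section Ops.
Context {H : Hilbert}.

Definition hsub (x y : H) : H := hadd x (hopp y).
Definition hnorm (x : H) : R := sqrt (Re (hip x x)).

Definition converges (u : nat -> H) (l : H) : Prop :=
  forall eps, 0 < eps -> exists N, forall n, (N <= n)%nat -> hnorm (hsub (u n) l) < eps.

Record op := mkOp { dom : H -> Prop; app : H -> H }.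

Definition op_linear (A : op) : Prop :=
  dom A hzero /\
  (forall x y, dom A x -> dom A y -> dom A (hadd x y) /\ app A (hadd x y) = hadd (app A x) (app A y)) /\
  (forall a x, dom A x -> dom A (hscal a x) /\ app A (hscal a x) = hscal a (app A x)).

Definition dense (P : H -> Prop) : Prop :=
  forall x eps, 0 < eps -> exists y, P y /\ hnorm (hsub x y) < eps.

Definition densely_defined (A : op) : Prop := op_linear A /\ dense (dom A).

Definition closed_op (A : op) : Prop :=
  forall (u : nat -> H) x y, (forall n, dom A (u n)) -> converges u x ->
    converges (fun n => app A (u n)) y -> dom A x /\ app A x = y.

Definition adj (A : op) : op :=
  mkOp (fun eta => exists zeta, forall xi, dom A xi -> hip (app A xi) eta = hip xi zeta)
       (fun eta => epsilon (inhabits hzero)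
          (fun zeta => forall xi, dom A xi -> hip (app A xi) eta = hip xi zeta)).

Definition op_eq (A B : op) : Prop :=
  (forall x, dom A x <-> dom B x) /\ (forall x, dom A x -> app A x = app B x).

Definition self_adjoint (A : op) : Prop := densely_defined A /\ op_eq A (adj A).

Definition lin_map {H' : Hilbert} (f : H -> H') : Prop :=
  (forall x y, f (hadd x y) = hadd (f x) (f y)) /\ (forall a x, f (hscal a x) = hscal a (f x)).

Definition bounded (f : H -> H) : Prop :=
  lin_map f /\ exists M, forall x, hnorm (f x) <= M * hnorm x.

Definition symmetric (f : H -> H) : Prop := forall x y, hip (f x) y = hip x (f y).

Definition bounded_metric (G : H -> H) : Prop :=
  bounded G /\ symmetric G /\ (forall x, x <> hzero -> 0 < Re (hip (G x) x)).

Definition is_pos_sqrt (G S : H -> H) : Prop :=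
  bounded S /\ symmetric S /\ (forall x, 0 <= Re (hip (S x) x)) /\ (forall x, S (S x) = G x).

Definition inv_op (f : H -> H) : op :=
  mkOp (fun y => exists x, f x = y) (fun y => epsilon (inhabits hzero) (fun x => f x = y)).

Definition image {H' : Hilbert} (f : H -> H') (P : H -> Prop) : H' -> Prop :=
  fun y => exists x, P x /\ f x = y.

End Ops.

Arguments op : clear implicits.

(* (K, J) is a completion of H w.r.t. <xi, eta>_G = <S xi, S eta> (S = G^{1/2}) *)
Definition is_G_completion {H K : Hilbert} (S : H -> H) (J : H -> K) : Prop :=
  lin_map J /\ (forall x y, hip (J x) (J y) = hip (S x) (S y)) /\ dense (fun k => exists x, J x = k).

(* the operator A, viewed as an operator in the completion K with domain J(D(A)) *)
Definition op_in {H K : Hilbert} (J : H -> K) (A : op H) : op K :=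
  mkOp (image J (dom A))
       (fun k => J (app A (epsilon (inhabits hzero) (fun x => dom A x /\ J x = k)))).

Definition conj_op {H : Hilbert} (S : H -> H) (A : op H) : op H :=
  mkOp (image S (dom A)) (fun y => S (app A (app (inv_op S) y))).

Definition cond_i {H : Hilbert} (G : H -> H) (A : op H) : Prop :=
  (forall y, image G (dom A) y <-> dom (adj A) y) /\
  (forall xi, dom A xi -> app (adj A) (G xi) = G (app A xi)).

Definition cond_ii {H : Hilbert} (S : H -> H) (A : op H) : Prop :=
  self_adjoint (conj_op S A).

Definition cond_iii {H K : Hilbert} (J : H -> K) (A : op H) : Prop :=
  self_adjoint (op_in J A).

Definition cond_iv {H : Hilbert} (G : H -> H) (A : op H) : Prop :=
  (forall y, image G (dom A) y <-> (dom (adj A) y /\ dom (inv_op G) (app (adj A) y))) /\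
  (forall xi, dom A xi -> app (adj A) (G xi) = G (app A xi)).

(* Main.v *)
Require Import Defs.
From Stdlib Require Import Reals Classical ClassicalEpsilon Lra Lia ZArith.
Open Scope R_scope.

Arguments hadd_assoc {h}. Arguments hadd_comm {h}. Arguments hadd_zero {h}. Arguments hadd_opp {h}.
Arguments hscal_one {h}. Arguments hscal_assoc {h}. Arguments hscal_addv {h}. Arguments hscal_adds {h}.
Arguments hip_conj {h}. Arguments hip_add {h}. Arguments hip_scal {h}. Arguments hip_pos {h}. Arguments hip_def {h}.

Lemma Ceq (a b : Defs.C) : Re a = Re b -> Im a = Im b -> a = b.
Proof. destruct a, b; simpl; intros; subst; reflexivity. Qed.

Ltac ceq := apply Ceq; simpl; try ring.

Section Basic.
Context {X : Hilbert}.
Implicit Types x y z : X.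

Lemma hadd_0l x : hadd hzero x = x.
Proof. rewrite hadd_comm; apply hadd_zero. Qed.

Lemma hadd_cancel x y z : hadd x y = hadd x z -> y = z.
Proof.
  intro E.
  assert (E2 : hadd (hopp x) (hadd x y) = hadd (hopp x) (hadd x z)) by (rewrite E; reflexivity).
  rewrite !hadd_assoc in E2.
  rewrite (hadd_comm (hopp x) x), hadd_opp, !hadd_0l in E2. exact E2.
Qed.

Lemma hscal_C0 x : hscal Defs.C0 x = hzero.
Proof.
  apply (hadd_cancel (hscal Defs.C0 x)).
  rewrite hadd_zero, <- hscal_adds. f_equal. ceq.
Qed.

Lemma hscal_zero a : hscal a (@hzero X) = hzero.
Proof.
  apply (hadd_cancel (hscal a hzero)).
  rewrite hadd_zero, <- hscal_addv, hadd_zero. reflexivity.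
Qed.

Definition Cm1 : Defs.C := mkC (-1) 0.

Lemma hopp_scal x : hopp x = hscal Cm1 x.
Proof.
  apply (hadd_cancel x). rewrite hadd_opp.
  rewrite <- (hscal_one x) at 1. rewrite <- hscal_adds.
  replace (Cadd Defs.C1 Cm1) with Defs.C0 by ceq. rewrite hscal_C0. reflexivity.
Qed.

Lemma hip_0l y : hip (@hzero X) y = Defs.C0.
Proof.
  rewrite <- (hscal_C0 hzero), hip_scal. ceq.
Qed.

Lemma hip_0r x : hip x (@hzero X) = Defs.C0.
Proof. rewrite hip_conj, hip_0l. ceq. Qed.

Lemma hip_addr x y z : hip x (hadd y z) = Cadd (hip x y) (hip x z).
Proof.
  rewrite hip_conj, hip_add, (hip_conj y x), (hip_conj z x). ceq.
Qed.

Lemma hip_scalr a x y : hip x (hscal a y) = Cmul (Cconj a) (hip x y).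
Proof. rewrite hip_conj, hip_scal, (hip_conj y x). ceq. Qed.

Lemma hip_oppl x y : hip (hopp x) y = Cmul Cm1 (hip x y).
Proof. rewrite hopp_scal, hip_scal. reflexivity. Qed.

Lemma hip_oppr x y : hip x (hopp y) = Cmul Cm1 (hip x y).
Proof. rewrite hopp_scal, hip_scalr. ceq. Qed.

Definition nsq x := Re (hip x x).

Lemma hip_self_im x : Im (hip x x) = 0.
Proof.
  pose proof (f_equal Im (hip_conj x x)) as E. simpl in E. lra.
Qed.

Lemma nsq_pos x : 0 <= nsq x.
Proof. apply hip_pos. Qed.

Lemma Re_hip_sym x y : Re (hip y x) = Re (hip x y).
Proof. rewrite hip_conj. reflexivity. Qed.

Lemma nsq_add x y : nsq (hadd x y) = nsq x + nsq y + 2 * Re (hip x y).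
Proof.
  unfold nsq. rewrite hip_add, !hip_addr. simpl. rewrite (Re_hip_sym x y). ring.
Qed.

Lemma nsq_scal a x : nsq (hscal a x) = (Re a * Re a + Im a * Im a) * nsq x.
Proof.
  unfold nsq. rewrite hip_scal, hip_scalr. simpl. rewrite hip_self_im. ring.
Qed.

Lemma nsq_opp x : nsq (hopp x) = nsq x.
Proof. rewrite hopp_scal, nsq_scal. simpl. ring. Qed.

Lemma Re_hip_oppr x y : Re (hip x (hopp y)) = - Re (hip x y).
Proof. rewrite hip_oppr. simpl. ring. Qed.

Lemma Re_hip_oppl x y : Re (hip (hopp x) y) = - Re (hip x y).
Proof. rewrite hip_oppl. simpl. ring. Qed.

Lemma nsq_sub x y : nsq (hsub x y) = nsq x + nsq y - 2 * Re (hip x y).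
Proof. unfold hsub. rewrite nsq_add, nsq_opp, Re_hip_oppr. ring. Qed.

Lemma nsq_zero_iff x : nsq x = 0 -> x = hzero.
Proof. apply hip_def. Qed.

Lemma hnorm_sq x : hnorm x * hnorm x = nsq x.
Proof. unfold hnorm. apply sqrt_sqrt, nsq_pos. Qed.

Lemma hnorm_pos x : 0 <= hnorm x.
Proof. apply sqrt_pos. Qed.

Lemma CS_Re x y : Re (hip x y) <= hnorm x * hnorm y.
Proof.
  destruct (Req_dec (nsq y) 0) as [Hy|Hy].
  - apply nsq_zero_iff in Hy. subst y. rewrite hip_0r. simpl.
    apply Rmult_le_pos; apply hnorm_pos.
  - assert (Hy' : 0 < nsq y) by (pose proof (nsq_pos y); lra).
    set (c := Re (hip x y)).
    assert (Q : 0 <= nsq x - c * c / nsq y).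
    { pose proof (nsq_pos (hsub x (hscal (mkC (c / nsq y) 0) y))) as P.
      rewrite nsq_sub, nsq_scal, hip_scalr in P. simpl in P.
      replace (nsq x - c * c / nsq y) with
        (nsq x + (c / nsq y * (c / nsq y) + 0 * 0) * nsq y -
       2 * (c / nsq y * Re (hip x y) - - 0 * Im (hip x y))).
      exact P. unfold c. field. lra. }
    destruct (Rle_dec c 0) as [Hc|Hc].
    + pose proof (Rmult_le_pos _ _ (hnorm_pos x) (hnorm_pos y)). lra.
    + apply Rsqr_incr_0_var.
      * unfold Rsqr. replace (hnorm x * hnorm y * (hnorm x * hnorm y)) with
          ((hnorm x * hnorm x) * (hnorm y * hnorm y)) by ring.
        rewrite !hnorm_sq.
        assert (c * c / nsq y <= nsq x) by lra.
        apply (Rmult_le_compat_r (nsq y)) in H; [|lra].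
        unfold Rdiv in H. rewrite Rmult_assoc, Rinv_l in H; lra.
      * apply Rmult_le_pos; apply hnorm_pos.
Qed.

Lemma CS_Re_abs x y : Rabs (Re (hip x y)) <= hnorm x * hnorm y.
Proof.
  apply Rabs_le. split.
  - pose proof (CS_Re x (hopp y)). rewrite Re_hip_oppr in H.
    unfold hnorm in H at 2. fold (nsq (hopp y)) in H. rewrite nsq_opp in H. change (sqrt (nsq y)) with (hnorm y) in H. lra.
  - apply CS_Re.
Qed.

Definition Ci : Defs.C := mkC 0 1.

Lemma CS_Im_abs x y : Rabs (Im (hip x y)) <= hnorm x * hnorm y.
Proof.
  pose proof (CS_Re_abs x (hscal Ci y)) as P.
  rewrite hip_scalr in P. unfold hnorm in P at 2. fold (nsq (hscal Ci y)) in P.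
  rewrite nsq_scal in P. simpl in P.
  replace ((0 * 0 + 1 * 1) * nsq y) with (nsq y) in P by ring.
  replace (0 * Re (hip x y) - - (1) * Im (hip x y)) with (Im (hip x y)) in P by ring.
  change (sqrt (nsq y)) with (hnorm y) in P. exact P.
Qed.

Lemma hnorm_triangle x y : hnorm (hadd x y) <= hnorm x + hnorm y.
Proof.
  apply Rsqr_incr_0_var.
  - unfold Rsqr. rewrite hnorm_sq, nsq_add.
    pose proof (CS_Re x y). rewrite <- (hnorm_sq x), <- (hnorm_sq y). nra.
  - pose proof (hnorm_pos x); pose proof (hnorm_pos y); lra.
Qed.

Lemma hnorm_opp x : hnorm (hopp x) = hnorm x.
Proof. unfold hnorm. fold (nsq (hopp x)). rewrite nsq_opp. reflexivity. Qed.

Lemma hnorm_zero_iff x : hnorm x = 0 -> x = hzero.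
Proof. intro E. apply nsq_zero_iff. rewrite <- hnorm_sq, E. ring. Qed.

Lemma hnorm_0 : hnorm (@hzero X) = 0.
Proof. unfold hnorm. rewrite hip_0l. simpl. apply sqrt_0. Qed.

End Basic.


Lemma seq_choice {T : Type} (P : nat -> T -> Prop) :
  (forall n, exists x, P n x) -> exists f : nat -> T, forall n, P n (f n).
Proof.
  intro Hn. exists (fun n => proj1_sig (constructive_indefinite_description _ (Hn n))).
  intro n. exact (proj2_sig (constructive_indefinite_description _ (Hn n))).
Qed.

Lemma inv_small eps : 0 < eps -> exists N : nat, forall n, (N <= n)%nat -> / (INR n + 1) < eps.
Proof.
  intro He. destruct (archimed (/ eps)) as [Hup _].
  assert (Hz : (0 <= up (/ eps))%Z).
  { apply le_IZR. pose proof (Rinv_0_lt_compat _ He). simpl. lra. }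
  exists (Z.to_nat (up (/ eps))). intros n Hn.
  apply le_INR in Hn. rewrite INR_IZR_INZ, Z2Nat.id in Hn by exact Hz.
  assert (P : / eps < INR n + 1) by lra.
  assert (Q : 0 < INR n + 1) by (pose proof (pos_INR n); lra).
  rewrite <- (Rinv_inv eps). apply Rinv_lt_contravar; [|exact P].
  apply Rmult_lt_0_compat; [apply Rinv_0_lt_compat; exact He| exact Q].
Qed.

Lemma Rabs_le_inv a b : Rabs a <= b -> - b <= a <= b.
Proof. unfold Rabs; destruct (Rcase_abs a); intros; lra. Qed.

Lemma inv_pos n : 0 < / (INR n + 1).
Proof. apply Rinv_0_lt_compat. pose proof (pos_INR n); lra. Qed.

Lemma le_eps a b : (forall eta, 0 < eta -> a <= b + eta) -> a <= b.
Proof.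
  intro Hab. destruct (Rle_dec a b) as [h|h]; [exact h|].
  specialize (Hab ((a - b) / 2)). lra.
Qed.

Lemma quad0 r q : 0 <= q -> (forall t, 2 * t * r <= t * t * q) -> r = 0.
Proof.
  intros Hq Ht. specialize (Ht (r / (q + 1))).
  assert (Hq1 : 0 < q + 1) by lra.
  assert (E : r * r * (q + 2) <= 0).
  { apply (Rmult_le_compat_r ((q + 1) * (q + 1))) in Ht; [|nra].
    replace (2 * (r / (q + 1)) * r * ((q + 1) * (q + 1))) with (2 * r * r * (q+1)) in Ht
      by (field; lra).
    replace (r / (q + 1) * (r / (q + 1)) * q * ((q + 1) * (q + 1))) with (r * r * q) in Ht
      by (field; lra).
    nra. }
  nra.
Qed.

Section Lim.
Context {X : Hilbert}.
Implicit Types x y z : X.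

Lemma hopp_add x y : hopp (hadd x y) = hadd (hopp x) (hopp y).
Proof. rewrite !hopp_scal. apply hscal_addv. Qed.

Lemma hopp_opp x : hopp (hopp x) = x.
Proof. rewrite !hopp_scal, hscal_assoc. rewrite <- (hscal_one x) at 2. f_equal. ceq. Qed.

Lemma hsub_zero_eq x y : hsub x y = hzero -> x = y.
Proof.
  unfold hsub. intro E.
  rewrite <- (hadd_zero x), <- (hadd_opp y), (hadd_comm y), hadd_assoc, E, hadd_0l.
  reflexivity.
Qed.

Lemma hsub_sym x y : hsub y x = hopp (hsub x y).
Proof. unfold hsub. rewrite hopp_add, hopp_opp, hadd_comm. reflexivity. Qed.

Lemma hnorm_sub_sym x y : hnorm (hsub y x) = hnorm (hsub x y).
Proof. rewrite hsub_sym, hnorm_opp. reflexivity. Qed.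

Lemma hsub_chain x y z : hsub x z = hadd (hsub x y) (hsub y z).
Proof.
  unfold hsub. rewrite <- hadd_assoc. f_equal.
  rewrite hadd_assoc, (hadd_comm (hopp y)), hadd_opp, hadd_0l. reflexivity.
Qed.

Lemma hnorm_sub_tri x y z : hnorm (hsub x z) <= hnorm (hsub x y) + hnorm (hsub y z).
Proof. rewrite (hsub_chain x y z). apply hnorm_triangle. Qed.

Lemma lim_unique (u : nat -> X) a b : converges u a -> converges u b -> a = b.
Proof.
  intros Ha Hb. apply hsub_zero_eq, hnorm_zero_iff.
  apply Rle_antisym; [|apply hnorm_pos].
  apply le_eps. intros eta He.
  destruct (Ha (eta/2)) as [N1 H1]; [lra|]. destruct (Hb (eta/2)) as [N2 H2]; [lra|].
  specialize (H1 (N1 + N2)%nat ltac:(lia)). specialize (H2 (N1 + N2)%nat ltac:(lia)).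
  pose proof (hnorm_sub_tri a (u (N1+N2)%nat) b). rewrite (hnorm_sub_sym (u (N1+N2)%nat) a) in H.
  lra.
Qed.

Lemma cauchy_conv (u : nat -> X) :
  (forall eps, 0 < eps -> exists N, forall m n, (N <= m)%nat -> (N <= n)%nat ->
      hnorm (hsub (u m) (u n)) < eps) -> exists l, converges u l.
Proof. intro Hc. exact (hcomplete X u Hc). Qed.

Lemma Re_add_l x y z : Re (hip (hadd x y) z) = Re (hip x z) + Re (hip y z).
Proof. rewrite hip_add. reflexivity. Qed.
Lemma Re_add_r x y z : Re (hip x (hadd y z)) = Re (hip x y) + Re (hip x z).
Proof. rewrite hip_addr. reflexivity. Qed.
Lemma Re_scalR_l r x y : Re (hip (hscal (mkC r 0) x) y) = r * Re (hip x y).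
Proof. rewrite hip_scal. simpl. ring. Qed.
Lemma Re_scalR_r r x y : Re (hip x (hscal (mkC r 0) y)) = r * Re (hip x y).
Proof. rewrite hip_scalr. simpl. ring. Qed.

Lemma orth_dense (P : X -> Prop) w : dense P -> (forall x, P x -> hip x w = Defs.C0) -> w = hzero.
Proof.
  intros Hd Ho. apply hnorm_zero_iff.
  apply Rle_antisym; [|apply hnorm_pos].
  destruct (Rle_dec (hnorm w) 0) as [h|h]; [exact h|].
  exfalso. assert (Hw : 0 < hnorm w) by lra.
  destruct (Hd w (hnorm w / 2)) as [x [Px Hx]]; [lra|].
  pose proof (CS_Re (hsub w x) w) as C.
  unfold hsub in C. rewrite Re_add_l, Re_hip_oppl, (Ho x Px) in C. simpl in C.
  fold (nsq w) in C. rewrite <- hnorm_sq in C. unfold hsub in Hx.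
  pose proof (hnorm_pos (hadd w (hopp x))). nra.
Qed.

Lemma hsub_zero_of x y : x = y -> hsub x y = hzero.
Proof. intros ->. apply hadd_opp. Qed.

Lemma adj_spec (A : op X) y : dom (adj A) y ->
  forall x, dom A x -> hip (app A x) y = hip x (app (adj A) y).
Proof.
  intro Hy. simpl.
  apply (epsilon_spec (inhabits hzero)
    (fun zeta => forall xi, dom A xi -> hip (app A xi) y = hip xi zeta)). exact Hy.
Qed.

Lemma adj_app (A : op X) y z : densely_defined A ->
  (forall x, dom A x -> hip (app A x) y = hip x z) -> dom (adj A) y /\ app (adj A) y = z.
Proof.
  intros [_ Hd] Hz.
  assert (D : dom (adj A) y) by (exists z; exact Hz).
  split; [exact D|].
  symmetry. apply hsub_zero_eq. apply (orth_dense (dom A)); [exact Hd|].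
  intros x Px. unfold hsub. rewrite hip_addr, hip_oppr, <- (adj_spec A y D x Px), Hz by exact Px.
  ceq.
Qed.

End Lim.

Ltac expand := unfold nsq, hsub in *;
  repeat (rewrite ?Re_add_l, ?Re_add_r, ?Re_hip_oppl, ?Re_hip_oppr, ?Re_scalR_l, ?Re_scalR_r in *).


Section Dens.
Context {X : Hilbert}.
Implicit Types x y z : X.

Lemma dense_of_orth (M : X -> Prop) :
  M hzero -> (forall x y, M x -> M y -> M (hadd x y)) -> (forall a x, M x -> M (hscal a x)) ->
  (forall z, (forall m, M m -> hip m z = Defs.C0) -> z = hzero) -> dense M.
Proof.
  intros M0 Madd Mscal Orth x eps He.
  set (E := fun r => exists m, M m /\ r = - nsq (hsub x m)).
  assert (Eb : bound E).
  { exists 0. intros r [m [_ ->]]. pose proof (nsq_pos (hsub x m)). lra. }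
  assert (Ene : exists r, E r) by (exists (- nsq (hsub x hzero)); exists hzero; split; auto).
  destruct (completeness E Eb Ene) as [L [HL1 HL2]].
  set (d2 := - L).
  assert (low : forall m, M m -> d2 <= nsq (hsub x m)).
  { intros m Hm. assert (E (- nsq (hsub x m))) by (exists m; split; auto).
    specialize (HL1 _ H). unfold d2. lra. }
  assert (appr : forall delta, 0 < delta -> exists m, M m /\ nsq (hsub x m) < d2 + delta).
  { intros delta Hd. apply NNPP. intro Hn.
    assert (bnd : is_upper_bound E (L - delta)).
    { intros r [m [Hm ->]]. apply Rnot_lt_le. intro Hlt. apply Hn. exists m. split; auto.
      unfold d2. lra. }
    specialize (HL2 _ bnd). lra. }
  destruct (seq_choice (fun n m => M m /\ nsq (hsub x m) < d2 + / (INR n + 1)))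
    as [ms Hms].
  { intro n. apply appr, inv_pos. }
  assert (mid : forall m m', M m -> M m' ->
     nsq (hsub m m') <= 2 * nsq (hsub x m) + 2 * nsq (hsub x m') - 4 * d2).
  { intros m m' Hm Hm'.
    assert (Hc : M (hscal (mkC (1/2) 0) (hadd m m'))) by auto.
    specialize (low _ Hc).
    assert (Id : nsq (hsub m m') = 2 * nsq (hsub x m) + 2 * nsq (hsub x m')
                   - 4 * nsq (hsub x (hscal (mkC (1/2) 0) (hadd m m')))).
    { expand. rewrite (Re_hip_sym m x), (Re_hip_sym m' x), (Re_hip_sym m' m). field. }
    lra. }
  destruct (cauchy_conv ms) as [p Hp].
  { intros e He'. destruct (inv_small (e * e / 4)) as [N HN]; [nra|].
    exists N. intros m n Hm Hn.
    destruct (Hms m) as [Mm Lm]. destruct (Hms n) as [Mn Ln].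
    specialize (mid _ _ Mm Mn). pose proof (HN m Hm). pose proof (HN n Hn).
    pose proof (low _ Mm). pose proof (low _ Mn).
    assert (nsq (hsub (ms m) (ms n)) < e * e) by lra.
    rewrite <- hnorm_sq in H3. pose proof (hnorm_pos (hsub (ms m) (ms n))). nra. }
  set (w := hsub x p).
  assert (ReO : forall m, M m -> Re (hip w m) = 0).
  { intros m Hm. apply (quad0 _ (nsq m)); [apply nsq_pos|]. intro t.
    apply le_eps. intros eta Heta.
    set (k := 1 + 2 * Rabs t * hnorm m).
    assert (Hk : 0 < k) by (unfold k; pose proof (Rabs_pos t); pose proof (hnorm_pos m); nra).
    destruct (inv_small (eta / (2 * k))) as [N1 HN1].
    { apply Rdiv_lt_0_compat; lra. }
    destruct (Hp (eta / (2 * k))) as [N2 HN2].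
    { apply Rdiv_lt_0_compat; lra. }
    set (n := (N1 + N2)%nat).
    specialize (HN1 n ltac:(unfold n; lia)). specialize (HN2 n ltac:(unfold n; lia)).
    destruct (Hms n) as [Mn Ln].
    assert (Mv : M (hadd (ms n) (hscal (mkC t 0) m))) by auto.
    specialize (low _ Mv).
    assert (Id : nsq (hsub x (hadd (ms n) (hscal (mkC t 0) m))) =
       nsq (hsub x (ms n)) - 2 * t * (Re (hip w m) + Re (hip (hsub p (ms n)) m)) + t * t * nsq m).
    { unfold w. expand. rewrite (Re_hip_sym m x), (Re_hip_sym m (ms n)). ring. }
    pose proof (CS_Re_abs (hsub p (ms n)) m) as Cs.
    rewrite hnorm_sub_sym in HN2.
    assert (B1 : Rabs (2 * t * Re (hip (hsub p (ms n)) m)) <= 2 * Rabs t * (eta / (2 * k)) * hnorm m).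
    { assert (C2 : Rabs (Re (hip (hsub p (ms n)) m)) <= eta / (2 * k) * hnorm m).
      { eapply Rle_trans; [exact Cs|]. apply Rmult_le_compat_r; [apply hnorm_pos|lra]. }
      rewrite !Rabs_mult, (Rabs_right 2) by lra.
      replace (2 * Rabs t * (eta / (2 * k)) * hnorm m) with (2 * Rabs t * (eta / (2 * k) * hnorm m)) by ring.
      apply Rmult_le_compat_l; [pose proof (Rabs_pos t); lra|exact C2]. }
    apply Rabs_le_inv in B1.
    assert (H : eta / (2 * k) * k = eta / 2) by (field; lra).
    set (e := eta / (2 * k)) in *.
    assert (E2 : 2 * Rabs t * e * hnorm m = eta / 2 - e) by (rewrite <- H; unfold k; ring).
    rewrite Id in low. lra. }
  assert (Hw : w = hzero).
  { apply Orth. intros m Hm.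
    assert (R1 := ReO m Hm). assert (R2 := ReO _ (Mscal Ci m Hm)).
    rewrite hip_scalr in R2. simpl in R2.
    rewrite hip_conj. ceq; [rewrite R1|]; lra. }
  assert (xp : x = p) by (apply hsub_zero_eq; exact Hw).
  destruct (Hp eps He) as [N HN]. exists (ms N). split; [apply Hms|].
  rewrite xp, hnorm_sub_sym. apply HN. lia.
Qed.

End Dens.


Definition Cmi : Defs.C := mkC 0 (-1).

Section SA.
Context {X : Hilbert}.
Implicit Types x y z : X.

Lemma hadd4 (a b c d : X) : hadd (hadd a b) (hadd c d) = hadd (hadd a c) (hadd b d).
Proof.
  rewrite <- !hadd_assoc. f_equal. rewrite !hadd_assoc. f_equal. apply hadd_comm.
Qed.

Lemma hscal_comm a b x : hscal a (hscal b x) = hscal b (hscal a x).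
Proof. rewrite !hscal_assoc. f_equal. ceq. Qed.

Lemma lin_app0 (B : op X) : op_linear B -> app B hzero = hzero.
Proof.
  intros [D0 [Dadd _]]. destruct (Dadd _ _ D0 D0) as [_ E].
  rewrite hadd_zero in E. apply (hadd_cancel (app B hzero)). rewrite hadd_zero. symmetry. exact E.
Qed.

Lemma lin_sub (B : op X) u v : op_linear B -> dom B u -> dom B v ->
  dom B (hsub u v) /\ app B (hsub u v) = hsub (app B u) (app B v).
Proof.
  intros [D0 [Dadd Dscal]] Hu Hv. unfold hsub. rewrite !hopp_scal.
  destruct (Dscal Cm1 v Hv) as [D1 E1]. destruct (Dadd _ _ Hu D1) as [D2 E2].
  split; [exact D2|]. rewrite E2, E1. reflexivity.
Qed.

Lemma sa_sym (B : op X) : self_adjoint B ->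
  forall x y, dom B x -> dom B y -> hip (app B x) y = hip x (app B y).
Proof.
  intros [_ [Hd Ha]] x y Hx Hy.
  assert (Dy : dom (adj B) y) by (apply Hd; exact Hy).
  rewrite (adj_spec B y Dy x Hx), (Ha y Hy). reflexivity.
Qed.

Lemma hip_lim (a b : nat -> X) la lb c d :
  converges a la -> converges b lb -> (forall n, hip c (a n) = hip d (b n)) -> hip c la = hip d lb.
Proof.
  intros Ha Hb E.
  assert (key : forall (f : Defs.C -> R),
    (forall x y, Rabs (f (hip x y)) <= hnorm x * hnorm y) ->
    (forall x y z, f (hip x (hsub y z)) = f (hip x y) - f (hip x z)) ->
    f (hip c la) = f (hip d lb)).
  { intros f Hf Hs.
    cut (Rabs (f (hip c la) - f (hip d lb)) <= 0).
    { intro Z. apply Rabs_le_inv in Z. lra. }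
    apply le_eps. intros eta He.
    set (k := hnorm c + hnorm d + 1).
    assert (Hk : 0 < k) by (unfold k; pose proof (hnorm_pos c); pose proof (hnorm_pos d); lra).
    destruct (Ha (eta / k)) as [N1 H1]; [apply Rdiv_lt_0_compat; lra|].
    destruct (Hb (eta / k)) as [N2 H2]; [apply Rdiv_lt_0_compat; lra|].
    specialize (H1 (N1+N2)%nat ltac:(lia)). specialize (H2 (N1+N2)%nat ltac:(lia)).
    set (n := (N1 + N2)%nat) in *.
    rewrite hnorm_sub_sym in H1, H2.
    pose proof (Hf c (hsub la (a n))) as F1. pose proof (Hf d (hsub lb (b n))) as F2.
    rewrite Hs in F1, F2. rewrite (E n) in F1.
    apply Rabs_le_inv in F1. apply Rabs_le_inv in F2.
    assert (G1 : hnorm c * hnorm (hsub la (a n)) <= hnorm c * (eta / k))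
      by (apply Rmult_le_compat_l; [apply hnorm_pos|lra]).
    assert (G2 : hnorm d * hnorm (hsub lb (b n)) <= hnorm d * (eta / k))
      by (apply Rmult_le_compat_l; [apply hnorm_pos|lra]).
    assert (G3 : hnorm c * (eta / k) + hnorm d * (eta / k) <= eta).
    { assert (Hek : eta / k * k = eta) by (field; lra).
      pose proof (Rdiv_lt_0_compat eta k He Hk).
      set (e := eta / k) in *.
      replace (hnorm c * e + hnorm d * e) with (e * k - e) by (unfold k; ring). lra. }
    apply Rabs_le. lra. }
  apply Ceq.
  - apply key; [apply CS_Re_abs|]. intros. unfold hsub. rewrite hip_addr, hip_oppr. simpl. ring.
  - apply key; [apply CS_Im_abs|]. intros. unfold hsub. rewrite hip_addr, hip_oppr. simpl. ring.
Qed.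

Lemma sqrt_small a b e : 0 <= a -> 0 <= b -> a * a <= b * b -> b < e -> a < e.
Proof. intros. nra. Qed.

Lemma sa_surj (B : op X) : self_adjoint B ->
  forall h, exists u, dom B u /\ hadd (app B u) (hscal Cmi u) = h.
Proof.
  intros SA. pose proof SA as [[Lin Dn] [Hd Ha]].
  pose proof Lin as [D0 [Dadd Dscal]].
  set (Bi := fun u => hadd (app B u) (hscal Cmi u)).
  assert (Bi_sub : forall u v, dom B u -> dom B v -> Bi (hsub u v) = hsub (Bi u) (Bi v)).
  { intros u v Hu Hv. unfold Bi. rewrite (proj2 (lin_sub B u v Lin Hu Hv)).
    unfold hsub. rewrite hscal_addv, hopp_add, hadd4. f_equal. f_equal.
    rewrite !hopp_scal, hscal_comm. reflexivity. }
  assert (Bi_norm : forall u, dom B u -> nsq (Bi u) = nsq (app B u) + nsq u).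
  { intros u Hu. unfold Bi. rewrite nsq_add, nsq_scal, hip_scalr. simpl.
    assert (Im (hip (app B u) u) = 0).
    { pose proof (f_equal Im (sa_sym B SA u u Hu Hu)) as E.
      rewrite (hip_conj u (app B u)) in E |- *. simpl in E |- *. lra. }
    rewrite H. ring. }
  assert (Dens : dense (fun w => exists u, dom B u /\ Bi u = w)).
  { apply dense_of_orth.
    - exists hzero. split; [exact D0|]. unfold Bi. rewrite lin_app0, hscal_zero, hadd_zero; auto.
    - intros x y [u [Hu <-]] [v [Hv <-]]. exists (hadd u v).
      destruct (Dadd u v Hu Hv) as [D E]. split; [exact D|].
      unfold Bi. rewrite E, hscal_addv, hadd4. reflexivity.
    - intros a x [u [Hu <-]]. exists (hscal a u).
      destruct (Dscal a u Hu) as [D E]. split; [exact D|].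
      unfold Bi. rewrite E, hscal_addv, hscal_comm. reflexivity.
    - intros z Hz.
      assert (W : forall x, dom B x -> hip (app B x) z = hip x (hscal Cmi z)).
      { intros x Hx. specialize (Hz (Bi x) (ex_intro _ x (conj Hx eq_refl))).
        unfold Bi in Hz. rewrite hip_add, hip_scal in Hz. rewrite hip_scalr.
        apply (f_equal Re) in Hz as R1. apply (f_equal Im) in Hz as I1. simpl in R1, I1.
        ceq; lra. }
      destruct (adj_app B z (hscal Cmi z) (conj Lin Dn) W) as [Dz Ez].
      assert (Bz : dom B z) by (apply Hd; exact Dz).
      assert (Ez' : app B z = hscal Cmi z) by (rewrite Ha by exact Bz; exact Ez).
      pose proof (sa_sym B SA z z Bz Bz) as S1. rewrite Ez', hip_scal, hip_scalr in S1.
      apply (f_equal Im) in S1. simpl in S1. rewrite hip_self_im in S1.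
      apply nsq_zero_iff. unfold nsq. lra. }
  intro h.
  destruct (seq_choice (fun n u => dom B u /\ hnorm (hsub (Bi u) h) < / (INR n + 1))) as [us Hus].
  { intro n. destruct (Dens h (/ (INR n + 1)) (inv_pos n)) as [w [[u [Hu <-]] Hw]].
    exists u. split; [exact Hu|]. rewrite hnorm_sub_sym. exact Hw. }
  assert (Cb : forall m n, hnorm (hsub (Bi (us m)) (Bi (us n))) < / (INR m + 1) + / (INR n + 1)).
  { intros m n. eapply Rle_lt_trans; [apply (hnorm_sub_tri _ h)|].
    rewrite (hnorm_sub_sym (Bi (us n)) h). pose proof (proj2 (Hus m)); pose proof (proj2 (Hus n)). lra. }
  assert (CbSmall : forall eps, 0 < eps -> exists N, forall m n, (N <= m)%nat -> (N <= n)%nat ->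
     hnorm (hsub (Bi (us m)) (Bi (us n))) < eps).
  { intros eps He. destruct (inv_small (eps / 2)) as [N HN]; [lra|]. exists N. intros m n Hm Hn.
    specialize (Cb m n). pose proof (HN m Hm); pose proof (HN n Hn). lra. }
  assert (Nrm : forall m n, nsq (hsub (Bi (us m)) (Bi (us n))) =
      nsq (hsub (app B (us m)) (app B (us n))) + nsq (hsub (us m) (us n))).
  { intros m n. rewrite <- Bi_sub by apply Hus.
    rewrite Bi_norm by (apply lin_sub; auto; apply Hus).
    rewrite (proj2 (lin_sub B _ _ Lin (proj1 (Hus m)) (proj1 (Hus n)))). reflexivity. }
  destruct (cauchy_conv us) as [u Hu].
  { intros eps He. destruct (CbSmall eps He) as [N HN]. exists N. intros m n Hm Hn.
    specialize (HN m n Hm Hn). specialize (Nrm m n).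
    rewrite <- !hnorm_sq in Nrm.
    pose proof (hnorm_pos (hsub (us m) (us n))).
    pose proof (hnorm_pos (hsub (app B (us m)) (app B (us n)))).
    apply (sqrt_small _ (hnorm (hsub (Bi (us m)) (Bi (us n))))); auto; [apply hnorm_pos|nra]. }
  destruct (cauchy_conv (fun n => app B (us n))) as [v Hv].
  { intros eps He. destruct (CbSmall eps He) as [N HN]. exists N. intros m n Hm Hn.
    specialize (HN m n Hm Hn). specialize (Nrm m n).
    rewrite <- !hnorm_sq in Nrm.
    pose proof (hnorm_pos (hsub (us m) (us n))).
    pose proof (hnorm_pos (hsub (app B (us m)) (app B (us n)))).
    apply (sqrt_small _ (hnorm (hsub (Bi (us m)) (Bi (us n))))); auto; [apply hnorm_pos|nra]. }
  assert (Adj : forall x, dom B x -> hip (app B x) u = hip x v).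
  { intros x Hx. apply (hip_lim us (fun n => app B (us n))); auto.
    intro n. apply sa_sym; auto. apply Hus. }
  destruct (adj_app B u v (conj Lin Dn) Adj) as [Du Eu].
  assert (Bu : dom B u) by (apply Hd; exact Du).
  assert (Eu' : app B u = v) by (rewrite Ha by exact Bu; exact Eu).
  exists u. split; [exact Bu|]. fold (Bi u).
  apply hsub_zero_eq, hnorm_zero_iff. apply Rle_antisym; [|apply hnorm_pos].
  apply le_eps. intros eta He.
  destruct (Hu (eta / 3)) as [N1 H1]; [lra|]. destruct (Hv (eta / 3)) as [N2 H2]; [lra|].
  destruct (inv_small (eta / 3)) as [N3 H3]; [lra|].
  set (n := (N1 + N2 + N3)%nat).
  specialize (H1 n ltac:(unfold n; lia)). specialize (H2 n ltac:(unfold n; lia)).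
  specialize (H3 n ltac:(unfold n; lia)).
  pose proof (proj2 (Hus n)) as H4.
  assert (Q : nsq (hsub (Bi u) (Bi (us n))) =
       nsq (hsub v (app B (us n))) + nsq (hsub u (us n))).
  { rewrite <- Bi_sub by (auto; apply Hus).
    rewrite Bi_norm by (apply lin_sub; auto; apply Hus).
    rewrite (proj2 (lin_sub B _ _ Lin Bu (proj1 (Hus n)))), Eu'. reflexivity. }
  rewrite <- !hnorm_sq in Q. rewrite hnorm_sub_sym in H1, H2.
  pose proof (hnorm_pos (hsub v (app B (us n)))). pose proof (hnorm_pos (hsub u (us n))).
  pose proof (hnorm_pos (hsub (Bi u) (Bi (us n)))).
  assert (hnorm (hsub (Bi u) (Bi (us n))) < 2 * (eta / 3)) by nra.
  pose proof (hnorm_sub_tri (Bi u) (Bi (us n)) h). lra.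
Qed.

End SA.


Section Gen.
Context {X Y : Hilbert}.

Lemma lin_zero (f : X -> Y) : lin_map f -> f hzero = hzero.
Proof.
  intros [_ Hs]. rewrite <- (hscal_C0 (@hzero X)), Hs, hscal_C0. reflexivity.
Qed.

Lemma lin_hsub (f : X -> Y) x y : lin_map f -> f (hsub x y) = hsub (f x) (f y).
Proof. intros [Ha Hs]. unfold hsub. rewrite Ha, !hopp_scal, Hs. reflexivity. Qed.

Lemma conv_of_bound (u : nat -> X) l :
  (forall n, hnorm (hsub (u n) l) < / (INR n + 1)) -> converges u l.
Proof.
  intros Hb eps He. destruct (inv_small eps He) as [N HN]. exists N. intros n Hn.
  specialize (HN n Hn). specialize (Hb n). lra.
Qed.

Lemma cauchy_of_bound (u : nat -> X) l :
  (forall n, hnorm (hsub (u n) l) < / (INR n + 1)) ->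
  forall eps, 0 < eps -> exists N, forall m n, (N <= m)%nat -> (N <= n)%nat ->
      hnorm (hsub (u m) (u n)) < eps.
Proof.
  intros Hb eps He. destruct (inv_small (eps/2)) as [N HN]; [lra|]. exists N. intros m n Hm Hn.
  pose proof (hnorm_sub_tri (u m) l (u n)). rewrite (hnorm_sub_sym (u n) l) in H.
  pose proof (HN m Hm). pose proof (HN n Hn). pose proof (Hb m). pose proof (Hb n). lra.
Qed.

End Gen.

Section Main.
Context (H : Hilbert) (A : op H) (G S : H -> H) (K : Hilbert) (J : H -> K).
Context (hA : densely_defined A) (hG : bounded_metric G) (hS : is_pos_sqrt G S)
  (hK : is_G_completion S J).

Lemma S_lin : lin_map S. Proof. exact (proj1 (proj1 hS)). Qed.
Lemma S_sym : forall x y, hip (S x) y = hip x (S y). Proof. exact (proj1 (proj2 hS)). Qed.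
Lemma SS_G : forall x, S (S x) = G x. Proof. exact (proj2 (proj2 (proj2 hS))). Qed.
Lemma J_lin : lin_map J. Proof. exact (proj1 hK). Qed.
Lemma J_ip : forall x y, hip (J x) (J y) = hip (S x) (S y). Proof. exact (proj1 (proj2 hK)). Qed.
Lemma J_dense : dense (fun k => exists x, J x = k). Proof. exact (proj2 (proj2 hK)). Qed.
Lemma A_lin : op_linear A. Proof. exact (proj1 hA). Qed.

Lemma S_zero : S hzero = hzero. Proof. apply lin_zero, S_lin. Qed.
Lemma J_zero : J hzero = hzero. Proof. apply lin_zero, J_lin. Qed.

Lemma S_inj : forall x y, S x = S y -> x = y.
Proof.
  intros x y E. apply hsub_zero_eq. set (w := hsub x y).
  assert (Sw : S w = hzero) by (unfold w; rewrite lin_hsub by apply S_lin; rewrite E; apply hadd_opp).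
  destruct (classic (w = hzero)) as [h|h]; [exact h|]. exfalso.
  pose proof (proj2 (proj2 hG) w h) as P. rewrite <- SS_G, Sw, S_zero, hip_0l in P. simpl in P. lra.
Qed.

Lemma hnorm_J x : hnorm (J x) = hnorm (S x).
Proof. unfold hnorm. rewrite J_ip. reflexivity. Qed.

Lemma hnorm_J_sub x y : hnorm (hsub (J x) (J y)) = hnorm (hsub (S x) (S y)).
Proof. rewrite <- (lin_hsub J) by apply J_lin. rewrite <- (lin_hsub S) by apply S_lin. apply hnorm_J. Qed.

Lemma J_inj : forall x y, J x = J y -> x = y.
Proof.
  intros x y E. apply S_inj. apply hsub_zero_eq, hnorm_zero_iff.
  rewrite <- hnorm_J_sub, E, hsub_zero_of by reflexivity. apply hnorm_0.
Qed.

Lemma S_bnd : exists M, 0 <= M /\ forall z a, hnorm (hsub (S z) (S a)) <= M * hnorm (hsub z a).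
Proof.
  destruct (proj2 (proj1 hS)) as [M HM]. exists (Rabs M). split; [apply Rabs_pos|].
  intros z a. rewrite <- (lin_hsub S) by apply S_lin. eapply Rle_trans; [apply HM|].
  apply Rmult_le_compat_r; [apply hnorm_pos|apply Rle_abs].
Qed.

Lemma approx_S (P : H -> Prop) : dense P -> forall z eps, 0 < eps ->
  exists a, P a /\ hnorm (hsub (S z) (S a)) < eps.
Proof.
  intros Hd z eps He. destruct S_bnd as [M [HM0 HM]].
  destruct (Hd z (eps / (M + 1))) as [a [Pa Ha]]; [apply Rdiv_lt_0_compat; lra|].
  exists a. split; [exact Pa|]. eapply Rle_lt_trans; [apply HM|].
  assert (eps / (M + 1) * (M + 1) = eps) by (field; lra).
  pose proof (hnorm_pos (hsub z a)). nra.
Qed.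

Lemma S_dense : dense (fun y => exists x, S x = y).
Proof.
  apply dense_of_orth.
  - exists hzero. apply S_zero.
  - intros u v [x <-] [y <-]. exists (hadd x y). apply (proj1 S_lin).
  - intros a u [x <-]. exists (hscal a x). apply (proj2 S_lin).
  - intros z Hz. assert (Sz : S z = hzero).
    { apply nsq_zero_iff. unfold nsq. rewrite <- S_sym. rewrite (Hz (S (S z))) by (exists (S z); reflexivity).
      reflexivity. }
    apply S_inj. rewrite Sz, S_zero. reflexivity.
Qed.

Lemma SDA_dense : dense (image S (dom A)).
Proof.
  intros y eps He. destruct (S_dense y (eps/2)) as [s [[x <-] Hx]]; [lra|].
  destruct (approx_S (dom A) (proj2 hA) x (eps/2)) as [a [Pa Ha]]; [lra|].
  exists (S a). split; [exists a; auto|].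
  pose proof (hnorm_sub_tri y (S x) (S a)). lra.
Qed.

Lemma J_onto_of_S_onto : (forall h, exists z, S z = h) -> forall k, exists x, J x = k.
Proof.
  intros Son k.
  destruct (seq_choice (fun n x => hnorm (hsub (J x) k) < / (INR n + 1))) as [xs Hxs].
  { intro n. destruct (J_dense k _ (inv_pos n)) as [j [[x <-] Hx]]. exists x.
    rewrite hnorm_sub_sym. exact Hx. }
  destruct (cauchy_conv (fun n => S (xs n))) as [h Hh].
  { intros eps He. destruct (cauchy_of_bound _ _ Hxs eps He) as [N HN]. exists N.
    intros m n Hm Hn. rewrite <- hnorm_J_sub. apply HN; auto. }
  destruct (Son h) as [z <-]. exists z.
  apply (lim_unique (fun n => J (xs n))); [|apply conv_of_bound; exact Hxs].
  intros eps He. destruct (Hh eps He) as [N HN]. exists N. intros n Hn.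
  rewrite hnorm_J_sub. apply HN; auto.
Qed.

Lemma S_onto_of_J_onto : (forall k, exists x, J x = k) -> forall h, exists z, S z = h.
Proof.
  intros Jon h.
  destruct (seq_choice (fun n x => hnorm (hsub (S x) h) < / (INR n + 1))) as [xs Hxs].
  { intro n. destruct (S_dense h _ (inv_pos n)) as [j [[x <-] Hx]]. exists x.
    rewrite hnorm_sub_sym. exact Hx. }
  destruct (cauchy_conv (fun n => J (xs n))) as [k Hk].
  { intros eps He. destruct (cauchy_of_bound _ _ Hxs eps He) as [N HN]. exists N.
    intros m n Hm Hn. rewrite hnorm_J_sub. apply HN; auto. }
  destruct (Jon k) as [z <-]. exists z.
  apply (lim_unique (fun n => S (xs n))); [|apply conv_of_bound; exact Hxs].
  intros eps He. destruct (Hk eps He) as [N HN]. exists N. intros n Hn.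
  rewrite <- hnorm_J_sub. apply HN; auto.
Qed.

Lemma appB : forall x, dom A x -> app (conj_op S A) (S x) = S (app A x).
Proof.
  intros x Hx. simpl. f_equal. f_equal.
  apply S_inj.
  apply (epsilon_spec (inhabits hzero) (fun x' => S x' = S x)). exists x; reflexivity.
Qed.

Lemma appT : forall x, dom A x -> app (op_in J A) (J x) = J (app A x).
Proof.
  intros x Hx. simpl. f_equal. f_equal.
  apply J_inj.
  apply (epsilon_spec (inhabits hzero) (fun x' => dom A x' /\ J x' = J x)). exists x; auto.
Qed.

Lemma B_lin : op_linear (conj_op S A).
Proof.
  destruct A_lin as [D0 [Dadd Dscal]]. split; [|split].
  - exists hzero. split; [exact D0|apply S_zero].
  - intros u v [x [Hx <-]] [y [Hy <-]]. destruct (Dadd x y Hx Hy) as [D E].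
    rewrite <- (proj1 S_lin). split; [exists (hadd x y); auto|].
    rewrite !appB by auto. rewrite E. apply (proj1 S_lin).
  - intros a u [x [Hx <-]]. destruct (Dscal a x Hx) as [D E].
    rewrite <- (proj2 S_lin). split; [exists (hscal a x); auto|].
    rewrite !appB by auto. rewrite E. apply (proj2 S_lin).
Qed.

Lemma T_lin : op_linear (op_in J A).
Proof.
  destruct A_lin as [D0 [Dadd Dscal]]. split; [|split].
  - exists hzero. split; [exact D0|apply J_zero].
  - intros u v [x [Hx <-]] [y [Hy <-]]. destruct (Dadd x y Hx Hy) as [D E].
    rewrite <- (proj1 J_lin). split; [exists (hadd x y); auto|].
    rewrite !appT by auto. rewrite E. apply (proj1 J_lin).
  - intros a u [x [Hx <-]]. destruct (Dscal a x Hx) as [D E].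
    rewrite <- (proj2 J_lin). split; [exists (hscal a x); auto|].
    rewrite !appT by auto. rewrite E. apply (proj2 J_lin).
Qed.

Lemma i_ii : cond_i G A -> cond_ii S A.
Proof.
  intros [Ci1 Ci2].
  assert (DD : densely_defined (conj_op S A)) by (split; [apply B_lin|apply SDA_dense]).
  assert (key : forall x, dom A x ->
     dom (adj (conj_op S A)) (S x) /\ app (adj (conj_op S A)) (S x) = S (app A x)).
  { intros x Hx. apply adj_app; [exact DD|]. intros y' [x' [Hx' <-]].
    rewrite appB by exact Hx'. rewrite S_sym, SS_G.
    assert (Dg : dom (adj A) (G x)) by (apply Ci1; exists x; auto).
    rewrite (adj_spec A _ Dg x' Hx'), Ci2 by exact Hx.
    rewrite <- SS_G, <- S_sym. reflexivity. }
  split; [exact DD|]. split.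
  - intro y. split.
    + intros [x [Hx <-]]. apply key, Hx.
    + intro Dy. set (z := app (adj (conj_op S A)) y).
      assert (W : forall x, dom A x -> hip (app A x) (S y) = hip x (S z)).
      { intros x Hx. rewrite <- !S_sym.
        rewrite <- appB by exact Hx. apply (adj_spec _ y Dy). exists x; auto. }
      destruct (adj_app A (S y) (S z) hA W) as [Dsy _].
      destruct (proj2 (Ci1 (S y)) Dsy) as [x0 [Hx0 E]].
      rewrite <- SS_G in E. apply S_inj in E. subst y. exists x0; auto.
  - intros y [x [Hx <-]]. rewrite appB by exact Hx. symmetry. apply key, Hx.
Qed.

Lemma ii_iii : cond_ii S A -> cond_iii J A.
Proof.
  intro SA. pose proof SA as [DDB [HdB HaB]].
  assert (Son : forall h, exists z, S z = h).
  { intro h. destruct (sa_surj _ SA h) as [u [[x [Hx <-]] E]].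
    rewrite appB in E by exact Hx. rewrite <- (proj2 S_lin), <- (proj1 S_lin) in E.
    eexists; exact E. }
  pose proof (J_onto_of_S_onto Son) as Jon.
  assert (DD : densely_defined (op_in J A)).
  { split; [apply T_lin|]. intros k eps He. destruct (Jon k) as [z <-].
    destruct (approx_S (dom A) (proj2 hA) z eps He) as [a [Pa Ha]].
    exists (J a). split; [exists a; auto|]. rewrite hnorm_J_sub. exact Ha. }
  assert (key : forall x, dom A x ->
     dom (adj (op_in J A)) (J x) /\ app (adj (op_in J A)) (J x) = J (app A x)).
  { intros x Hx. apply adj_app; [exact DD|]. intros y' [x' [Hx' <-]].
    rewrite appT, !J_ip by exact Hx'. rewrite <- !appB by auto.
    apply sa_sym; auto; eexists; eauto. }
  split; [exact DD|]. split.
  - intro k. split.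
    + intros [x [Hx <-]]. apply key, Hx.
    + intro Dk. destruct (Jon k) as [v <-].
      destruct (Jon (app (adj (op_in J A)) (J v))) as [w Ew].
      assert (W : forall u, dom (conj_op S A) u -> hip (app (conj_op S A) u) (S v) = hip u (S w)).
      { intros u [x [Hx <-]]. rewrite appB by exact Hx. rewrite <- !J_ip, <- appT by exact Hx.
        rewrite Ew. apply (adj_spec _ _ Dk). exists x; auto. }
      destruct (adj_app _ (S v) (S w) DDB W) as [Dsv _].
      apply HdB in Dsv. destruct Dsv as [x0 [Hx0 E]]. apply S_inj in E. subst v.
      exists x0; auto.
  - intros k [x [Hx <-]]. rewrite appT by exact Hx. symmetry. apply key, Hx.
Qed.

Lemma iii_iv : cond_iii J A -> cond_iv G A.
Proof.
  intro SA. pose proof SA as [DDT [HdT HaT]].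
  assert (Jon : forall k, exists x, J x = k).
  { intro k. destruct (sa_surj _ SA k) as [u [[x [Hx <-]] E]].
    rewrite appT in E by exact Hx. rewrite <- (proj2 J_lin), <- (proj1 J_lin) in E.
    eexists; exact E. }
  pose proof (S_onto_of_J_onto Jon) as Son.
  assert (Gon : forall y, exists v, G v = y).
  { intro y. destruct (Son y) as [a <-]. destruct (Son a) as [v <-]. exists v. symmetry. apply SS_G. }
  assert (key : forall x', dom A x' ->
     dom (adj A) (G x') /\ app (adj A) (G x') = G (app A x')).
  { intros x' Hx'. apply adj_app; [exact hA|]. intros x Hx.
    rewrite <- !SS_G. rewrite <- (S_sym (app A x) (S x')), <- (S_sym x (S (app A x'))).
    rewrite <- !J_ip. rewrite <- (appT x Hx), <- (appT x' Hx').
    apply sa_sym; auto; eexists; eauto. }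
  split; [|intros; apply key; auto].
  intro y. split.
  - intros [x' [Hx' <-]]. destruct (key x' Hx') as [D E]. split; [exact D|].
    rewrite E. exists (app A x'). reflexivity.
  - intros [Dy _]. destruct (Gon y) as [v <-].
    destruct (Gon (app (adj A) (G v))) as [w Ew].
    assert (W : forall k, dom (op_in J A) k -> hip (app (op_in J A) k) (J v) = hip k (J w)).
    { intros k [x [Hx <-]]. rewrite appT by exact Hx. rewrite !J_ip, S_sym, SS_G, S_sym, SS_G.
      rewrite Ew. apply (adj_spec _ _ Dy). exact Hx. }
    destruct (adj_app _ (J v) (J w) DDT W) as [Djv _].
    apply HdT in Djv. destruct Djv as [x0 [Hx0 E]]. apply J_inj in E. subst v.
    exists x0; auto.
Qed.

Lemma main_sec :
  (cond_i G A -> cond_ii S A) /\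
  (cond_ii S A -> cond_iii J A) /\
  (cond_iii J A -> cond_iv G A) /\
  ((forall y, dom (adj A) y -> dom (inv_op G) (app (adj A) y)) ->
     (cond_i G A <-> cond_ii S A) /\ (cond_i G A <-> cond_iii J A) /\
     (cond_i G A <-> cond_iv G A)).
Proof.
  split; [exact i_ii|]. split; [exact ii_iii|]. split; [exact iii_iv|].
  intro HR.
  assert (iv_i : cond_iv G A -> cond_i G A).
  { intros [C1 C2]. split; [|exact C2]. intro y. split.
    - intro Hy. apply C1, Hy.
    - intro Dy. apply C1. split; [exact Dy|apply HR, Dy]. }
  split; [|split]; split; intro Hc.
  - apply i_ii, Hc.
  - apply iv_i, iii_iv, ii_iii, Hc.
  - apply ii_iii, i_ii, Hc.
  - apply iv_i, iii_iv, Hc.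
  - apply iii_iv, ii_iii, i_ii, Hc.
  - apply iv_i, Hc.
Qed.

End Main.

Theorem proposition5p14 (H : Hilbert) (A : op H) (G S : H -> H) (K : Hilbert) (J : H -> K)
  (hA_dense : densely_defined A) (hA_closed : closed_op A)
  (hG : bounded_metric G) (hS : is_pos_sqrt G S) (hK : is_G_completion S J) :
  (cond_i G A -> cond_ii S A) /\
  (cond_ii S A -> cond_iii J A) /\
  (cond_iii J A -> cond_iv G A) /\
  ((forall y, dom (adj A) y -> dom (inv_op G) (app (adj A) y)) ->
     (cond_i G A <-> cond_ii S A) /\ (cond_i G A <-> cond_iii J A) /\
     (cond_i G A <-> cond_iv G A)).
Proof. eapply main_sec; eassumption. Qed.
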